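(* Let $\boldsymbol Z$ be a square-integrable random vector in $\mathbb R^d$ and $Y$ a random element. Let $\{S_h\}_{h=1}^H$ be a partition of the range of $Y$ such that, for some $\gamma>0$ and $\tau>1+\gamma$, $0<\mathbb P(Y\in S_h)\le(1+\gamma)H^{-1}$ for all $h$, and for every unit $\boldsymbol\beta\in\mathbb R^d$, $$\frac1H\sum_{h=1}^H\mathrm{var}\big(\boldsymbol\beta^\top\mathbb E(\boldsymbol Z\mid Y)\mid Y\in S_h\big)\le\frac1\tau\mathrm{var}\big(\boldsymbol\beta^\top\mathbb E(\boldsymbol Z\mid Y)\big).$$ Let $W=\sum_{h=1}^H h\,\mathbf 1_{Y\in S_h}$. Then for every unit $\boldsymbol\beta\in\mathbb R^d$, $$\Big(1-\frac{1+\gamma}{\tau}\Big)\mathrm{var}\big(\boldsymbol\beta^\top\mathbb E(\boldsymbol Z\mid Y)\big)\le\mathrm{var}\big(\boldsymbol\beta^\top\mathbb E(\boldsymbol Z\mid W)\big).$$ *)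

(* Defs.v *)
From HB Require Import structures.
From mathcomp Require Import all_boot all_order all_algebra.
From mathcomp Require Import all_classical all_reals all_analysis.
Set Implicit Arguments. Unset Strict Implicit. Unset Printing Implicit Defensive.
Import Order.TTheory GRing.Theory Num.Theory.
Local Open Scope classical_set_scope.
Local Open Scope ring_scope.

Section Defs.
Context {dT : measure_display} {T : measurableType dT} {R : realType}.
Variable P : probability T R.

Definition expect (X : T -> R) : R := fine (\int[P]_x (X x)%:E).

Definition var_rv (X : T -> R) : R :=
  expect (fun x => (X x - expect X) ^+ 2).

Definition cexp_event (A : set T) (X : T -> R) : R :=
  fine (\int[P]_(x in A) (X x)%:E) / fine (P A).

Definition cvar_event (A : set T) (X : T -> R) : R :=
  cexp_event A (fun x => (X x - cexp_event A X) ^+ 2).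

(* m \o V is a version of the conditional expectation E(X | V), i.e. E(X | sigma(V)):
   m is measurable (so m \o V is sigma(V)-measurable, Doob-Dynkin), m \o V is
   integrable, and the integrals of X and m \o V agree on every event {V in B}. *)
Definition is_cond_exp {dU : measure_display} {U : measurableType dU}
  (V : T -> U) (X : T -> R) (m : U -> R) : Prop :=
  [/\ measurable_fun setT m,
      P.-integrable setT (fun x => (m (V x))%:E) &
      forall B : set U, measurable B ->
        (\int[P]_(x in V @^-1` B) (X x)%:E = \int[P]_(x in V @^-1` B) (m (V x))%:E)%E].

Definition is_cond_exp_vec {dU : measure_display} {U : measurableType dU} (d : nat)
  (V : T -> U) (Z : T -> 'rV[R]_d) (m : U -> 'rV[R]_d) : Prop :=
  forall i : 'I_d, is_cond_exp V (fun x => Z x ord0 i) (fun u => m u ord0 i).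

End Defs.

Definition dotv {R : pzRingType} (d : nat) (b v : 'rV[R]_d) : R :=
  \sum_(i < d) b ord0 i * v ord0 i.

(* Main.v *)
Require Import Defs.
From HB Require Import structures.
From mathcomp Require Import all_boot all_order all_algebra.
From mathcomp Require Import all_classical all_reals all_analysis.
From mathcomp Require Import measurable_realfun.
From mathcomp Require Import ring lra.
Set Implicit Arguments. Unset Strict Implicit. Unset Printing Implicit Defensive.
Import Order.TTheory GRing.Theory Num.Theory.
Local Open Scope classical_set_scope.
Local Open Scope ring_scope.
Section Part.
Context (R : realType) (dT : measure_display) (T : measurableType dT)
  (P : probability T R) (H : nat) (A : 'I_H -> set T).
Hypothesis mA : forall h, measurable (A h).
Hypothesis disjA : forall h k, h != k -> A h `&` A k = set0.
Hypothesis covA : forall x, exists h, A h x.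

Lemma bigA : \big[setU/set0]_(h <- index_enum 'I_H) A h = setT.
Proof.
rewrite -bigcup_seq; apply/seteqP; split => // x _.
have [h Ah] := covA x; exists h => //=.
by rewrite /index_enum -enumT mem_enum.
Qed.

Lemma trivA : trivIset [set` index_enum 'I_H] A.
Proof.
move=> i j _ _ [x [Ai Aj]]; apply/eqP; apply/negPn/negP => /disjA ij.
by have : (A i `&` A j) x by []; rewrite ij.
Qed.

Lemma partE (F : T -> R) : measurable_fun setT F ->
  (forall h, P.-integrable (A h) (EFin \o F)) ->
  Rintegral P setT F = \sum_(h < H) Rintegral P (A h) F.
Proof.
move=> mF iF.
have := integral_bigsetU_EFin P mA (index_enum_uniq _) trivA.
rewrite /= bigA => E; rewrite /Rintegral E; last exact/measurable_EFinP.
rewrite -sum_fine //= => h _; exact: integrable_fin_num.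
Qed.

End Part.
Section Gen.
Context (R : realType) (dT : measure_display) (T : measurableType dT)
  (P : probability T R).

Lemma int_dot (d : nat) (D : set T) (mD : measurable D) (F : 'I_d -> T -> R)
  (b : 'I_d -> R) :
  (forall i, P.-integrable D (EFin \o F i)) ->
  P.-integrable D (EFin \o (fun x => \sum_i b i * F i x)) /\
  Rintegral P D (fun x => \sum_i b i * F i x) = \sum_i b i * Rintegral P D (F i).
Proof.
move=> iF.
have iF' : forall i, P.-integrable D (fun x => (b i)%:E * (F i x)%:E)%E.
  by move=> i; apply: integrableZl (iF i).
have E : (fun x => (\sum_i b i * F i x)%:E) =
         (fun x => \sum_i (b i)%:E * (F i x)%:E)%E.
  by apply: funext => x; rewrite -sumEFin; apply: eq_bigr => i _; rewrite EFinM.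
split.
  by change (P.-integrable D (fun x => (\sum_i b i * F i x)%:E)); rewrite E;
    exact: integrable_sum.
rewrite /Rintegral E (integral_sum mD iF') -sum_fine; last first.
  by move=> i _; apply: integrable_fin_num.
apply: eq_bigr => i _; rewrite integralZl //.
have := integrable_fin_num mD (iF i).
by case: (\int[P]_(x in D) (F i x)%:E)%E.
exact: iF.
Qed.

Lemma int_lin (D : set T) (mD : measurable D) (F : T -> R) (k1 k2 : R) :
  P.-integrable D (EFin \o F) ->
  P.-integrable D (EFin \o (fun x => k1 * F x + k2)).
Proof.
move=> iF.
have := integrableD mD (integrableZl mD k1 iF) (finite_measure_integrable_cst P k2 mD).
by apply: eq_integrable => // x _ /=; rewrite EFinD EFinM.
Qed.

Lemma Rint_lin (D : set T) (mD : measurable D) (F : T -> R) (k1 k2 : R) :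
  P.-integrable D (EFin \o F) ->
  Rintegral P D (fun x => k1 * F x + k2) = k1 * Rintegral P D F + k2 * fine (P D).
Proof.
move=> iF; rewrite RintegralD //; last exact: finite_measure_integrable_cst.
  by rewrite RintegralZl // Rintegral_cst.
have := integrableZl mD k1 iF.
by apply: eq_integrable => // x _ /=; rewrite EFinM.
Qed.


End Gen.

Unset Implicit Arguments.

Theorem mainTheorem12 (R : realType) (dT : measure_display) (T : measurableType dT)
  (P : probability T R) (d : nat) (Z : T -> 'rV[R]_d)
  (dU : measure_display) (U : measurableType dU) (Y : T -> U)
  (H : nat) (S : 'I_H -> set U) (gamma tau : R) :
  (* Z is a square-integrable random vector in R^d *)
  (forall i : 'I_d, measurable_fun setT (fun x => Z x ord0 i)) ->
  (forall i : 'I_d, P.-integrable setT (fun x => ((Z x ord0 i) ^+ 2)%:E)) ->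
  (* Y is a random element *)
  measurable_fun setT Y ->
  (* {S_h} is a (measurable) partition of the range of Y *)
  (forall h, measurable (S h)) ->
  (forall h k, h != k -> S h `&` S k = set0) ->
  range Y `<=` \bigcup_(h in [set: 'I_H]) S h ->
  0 < gamma -> 1 + gamma < tau ->
  (forall h, (0 < P (Y @^-1` S h))%E /\
             (P (Y @^-1` S h) <= ((1 + gamma) / H%:R)%:E)%E) ->
  forall m : U -> 'rV[R]_d, is_cond_exp_vec P Y Z m ->
  (forall beta : 'rV[R]_d, dotv beta beta = 1 ->
     H%:R^-1 * \sum_(h < H) cvar_event P (Y @^-1` S h) (fun x => dotv beta (m (Y x)))
       <= tau^-1 * var_rv P (fun x => dotv beta (m (Y x)))) ->
  let W : T -> R := fun x => \sum_(h < H) (h.+1)%:R * \1_(Y @^-1` S h) x in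
  forall mW : R -> 'rV[R]_d, is_cond_exp_vec P W Z mW ->
  forall beta : 'rV[R]_d, dotv beta beta = 1 ->
    (1 - (1 + gamma) / tau) * var_rv P (fun x => dotv beta (m (Y x)))
      <= var_rv P (fun x => dotv beta (mW (W x))).
Proof.
move=> _ _ mY mS disj cov gpos gtau hP m hm hyp W mW hmW beta hb.
set A := fun h => Y @^-1` S h.
have mA : forall h, measurable (A h).
  by move=> h; have := mY measurableT _ (mS h); rewrite setTI.
have disjA : forall h k, h != k -> A h `&` A k = set0.
  by move=> h k hk; rewrite /A -preimage_setI disj // preimage_set0.
have covA : forall x, exists h, A h x.
  move=> x; have : range Y (Y x) by exists x.
  move/cov => [h _ Sh].
  by exists h.
have WA : forall h x, A h x -> W x = (h.+1)%:R.
  move=> h x Ahx; rewrite /W (bigD1 h) //= indicE mem_set // mulr1 big1 ?addr0 //.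
  move=> k kh; rewrite indicE memNset ?mulr0 // => Akx.
  by have : (A k `&` A h) x by []; rewrite disjA.
have Wpre : forall h : 'I_H, W @^-1` [set (h.+1)%:R] = A h.
  move=> h; apply/seteqP; split => x /=; last by move/WA.
  have [k Akx] := covA x; rewrite (WA k x Akx) => /eqP; rewrite eqr_nat eqSS => /eqP kh.
  by have -> : h = k by apply: val_inj.

set f := fun x => dotv beta (m (Y x)).
set g := fun x => dotv beta (mW (W x)).
have iFm : forall i, P.-integrable setT (EFin \o (fun x => m (Y x) ord0 i)).
  by move=> i; case: (hm i) => _ ? _.
have iFw : forall i, P.-integrable setT (EFin \o (fun x => mW (W x) ord0 i)).
  by move=> i; case: (hmW i) => _ ? _.
have fD : forall D, measurable D -> P.-integrable D (EFin \o f) /\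
    Rintegral P D f = \sum_i beta ord0 i * Rintegral P D (fun x => m (Y x) ord0 i).
  move=> D mD; rewrite /f /dotv; apply: (int_dot mD (F := fun i x => m (Y x) ord0 i) (fun i => beta ord0 i)).
  by move=> i; exact: (integrableS measurableT mD (subsetT _) (iFm i)).
have gD : forall D, measurable D -> P.-integrable D (EFin \o g) /\
    Rintegral P D g = \sum_i beta ord0 i * Rintegral P D (fun x => mW (W x) ord0 i).
  move=> D mD; rewrite /f /dotv; apply: (int_dot mD (F := fun i x => mW (W x) ord0 i) (fun i => beta ord0 i)).
  by move=> i; exact: (integrableS measurableT mD (subsetT _) (iFw i)).
have coord : forall h i, Rintegral P (A h) (fun x => m (Y x) ord0 i) =
                        Rintegral P (A h) (fun x => mW (W x) ord0 i).
  move=> h i; rewrite /Rintegral; congr fine.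
  case: (hm i) => _ _ e1; case: (hmW i) => _ _ e2.
  have := e1 (S h) (mS h); have := e2 _ (measurable_set1 (h.+1)%:R).
  rewrite Wpre => e2' e1'; rewrite -e2'; exact/esym.
have afg : forall h, Rintegral P (A h) f = Rintegral P (A h) g.
  move=> h; have [_ ->] := fD _ (mA h); have [_ ->] := gD _ (mA h).
  by apply: eq_bigr => i _; rewrite coord.
set c := fun h : 'I_H => dotv beta (mW (h.+1)%:R).
set p := fun h : 'I_H => fine (P (A h)).
have gA : forall h, Rintegral P (A h) g = c h * p h.
  move=> h; rewrite (@eq_Rintegral _ _ _ _ _ (fun _ => c h)); first exact: Rintegral_cst.
  by move=> x /set_mem Ax; rewrite /g (WA h x Ax).
have ph : forall h, P (A h) = (p h)%:E.
  by move=> h; rewrite fineK // fin_num_measure.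
have p0 : forall h, 0 < p h.
  by move=> h; have [+ _] := hP h; rewrite -/(A h) ph lte_fin.
have pH : forall h, p h <= (1 + gamma) / H%:R.
  by move=> h; have [_ +] := hP h; rewrite -/(A h) ph lee_fin.
have mf : measurable_fun setT f.
  by apply/measurable_EFinP; exact: (measurable_int P (fD _ measurableT).1).
have mg : measurable_fun setT g.
  by apply/measurable_EFinP; exact: (measurable_int P (gD _ measurableT).1).
have psum : \sum_(h < H) p h = 1.
  have E := partE (P := P) mA disjA covA (F := fun _ : T => 1 : R) (measurable_cst _)
    (fun h => finite_measure_integrable_cst P 1 (mA h)).
  move: E; rewrite Rintegral_cst // mul1r [fine _](_ : _ = 1); last first.
    exact: (congr1 fine (probability_setT P)).
  move=> ->.
  by apply: eq_bigr => h _; rewrite Rintegral_cst // mul1r.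
set mu := Defs.expect P f.
have muE : mu = \sum_(h < H) c h * p h.
  rewrite /mu /Defs.expect -/(Rintegral P setT f) (partE (P := P) mA disjA covA mf).
    by apply: eq_bigr => h _; rewrite afg gA.
  by move=> h; exact: (fD _ (mA h)).1.
have EgE : Defs.expect P g = mu.
  rewrite /Defs.expect -/(Rintegral P setT g) (partE (P := P) mA disjA covA mg).
    by rewrite muE; apply: eq_bigr => h _; rewrite gA.
  by move=> h; exact: (gD _ (mA h)).1.
have varg : var_rv P g = \sum_(h < H) (c h - mu) ^+ 2 * p h.
  rewrite /var_rv EgE /Defs.expect -/(Rintegral P setT _) (partE (P := P) mA disjA covA).
  - apply: eq_bigr => h _.
    rewrite (@eq_Rintegral _ _ _ _ _ (fun _ => (c h - mu) ^+ 2)); first exact: Rintegral_cst.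
    by move=> x /set_mem Ax; rewrite /g (WA h x Ax).
  - by apply: measurable_funX; apply: measurable_funB.
  - move=> h; apply: (eq_integrable (mA h) (EFin \o cst ((c h - mu) ^+ 2))).
      by move=> x /set_mem Ax; rewrite /= /g (WA h x Ax).
    exact: finite_measure_integrable_cst.
have cv0 : forall h, 0 <= cvar_event P (A h) f.
  move=> h; rewrite /cvar_event /cexp_event; apply: divr_ge0.
    by apply: (@Rintegral_ge0 _ _ _ P) => x _; exact: sqr_ge0.
  exact/ltW/p0.
have hyp' : H%:R^-1 * \sum_(h < H) cvar_event P (A h) f <= tau^-1 * var_rv P f.
  exact: hyp beta hb.
have vg0 : 0 <= var_rv P g.
  by rewrite varg; apply: sumr_ge0 => h _; apply: mulr_ge0; [exact: sqr_ge0|exact/ltW/p0].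
set q := fun x => (f x - mu) ^+ 2.
have mq : measurable_fun setT q.
  by apply: measurable_funX; apply: measurable_funB.
have [iq|niq] := pselect (P.-integrable setT (EFin \o q)); last first.
  have -> : var_rv P f = 0.
    rewrite /var_rv -/mu /Defs.expect -/q.
    suff -> : (\int[P]_x (q x)%:E = +oo)%E by [].
    apply/eqP; rewrite eq_le leey /= leNgt; apply/negP => lt; apply: niq.
    apply/integrableP; split; first exact/measurable_EFinP.
    under eq_integral do rewrite gee0_abs ?lee_fin ?sqr_ge0 //.
    exact: lt.
  by rewrite mulr0.
have qA : forall h, P.-integrable (A h) (EFin \o q).
  by move=> h; exact: (integrableS measurableT (mA h) (subsetT _) iq).
have varf : var_rv P f = \sum_(h < H) Rintegral P (A h) q.
  exact: (partE (P := P) mA disjA covA mq qA).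
have cfE : forall h, cexp_event P (A h) f = c h.
  move=> h; change (Rintegral P (A h) f / p h = c h).
  by rewrite afg gA mulfK // gt_eqF // p0.
have cvE : forall h, cvar_event P (A h) f =
    (Rintegral P (A h) q - (c h - mu) ^+ 2 * p h) / p h.
  move=> h; rewrite /cvar_event cfE.
  change (Rintegral P (A h) (fun x => (f x - c h) ^+ 2) / p h =
    (Rintegral P (A h) q - (c h - mu) ^+ 2 * p h) / p h); congr (_ / _).
  rewrite (@eq_Rintegral _ _ _ _ _
     (fun x => q x + ((2 * (mu - c h)) * f x + (c h ^+ 2 - mu ^+ 2)))); last first.
    by move=> x _; rewrite /q /=; ring.
  rewrite RintegralD //; last exact: int_lin (fD _ (mA h)).1.
  rewrite Rint_lin //; last exact: (fD _ (mA h)).1.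
  rewrite afg gA -/(p h); ring.
have e1 : var_rv P f - var_rv P g = \sum_(h < H) p h * cvar_event P (A h) f.
  rewrite varf varg -sumrB; apply: eq_bigr => h _.
  by rewrite cvE [RHS]mulrC divfK // gt_eqF // p0.
have e2 : \sum_(h < H) p h * cvar_event P (A h) f <=
    (1 + gamma) * (H%:R^-1 * \sum_(h < H) cvar_event P (A h) f).
  rewrite mulrA mulr_sumr; apply: ler_sum => h _.
  apply: ler_wpM2r; first exact: cv0.
  exact: (pH h).
have e3 : (1 + gamma) * (H%:R^-1 * \sum_(h < H) cvar_event P (A h) f) <=
    (1 + gamma) * (tau^-1 * var_rv P f).
  apply: ler_wpM2l; last exact: hyp'.
  by rewrite addr_ge0 // ltW.
have hh : var_rv P f - var_rv P g <= (1 + gamma) * (tau^-1 * var_rv P f).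
  by rewrite e1; exact: le_trans e2 e3.
rewrite mulrBl mul1r -mulrA.
by rewrite lerBlDr addrC -lerBlDr.
Qed.
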